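(* Let $n\ge2$ and $S=(a_1,\dots,a_n)$ with all $a_i$ positive integers. Define $\bar S=(L/a_1,\dots,L/a_n)$ where $L=\mathrm{lcm}(S)$. Then: (a) $\bar S$ is normal and $\overline{(\bar S)}$ is the normalization of $S$. (b) $J^*(\bar S)=J(S)$ and $J^*(S)=J(\bar S)$. (c) $\mathrm{type}(\bar S)=\mathrm{cotype}(S)$ and $\mathrm{type}(S)=\mathrm{cotype}(\bar S)$.
   Context: For $S=(a_1,\dots,a_n)\in\mathbb{Z}^n$: $S$ is normal if $\gcd(S)=1$; if $S\neq 0$ its normalization is $(a_1/d,\dots,a_n/d)$ with $d=\gcd(S)$. $S_i$ denotes $S$ with the $i$-th entry omitted. $J^*(S)=\{i\in\{1,\dots,n\}:\gcd(S_i)\neq\gcd(S)\}$, $J(S)=\{i:\mathrm{lcm}(S_i)\neq\mathrm{lcm}(S)\}=\{i: a_i\nmid\mathrm{lcm}(S_i)\}$, $\mathrm{type}(S)=|J^*(S)|$, $\mathrm{cotype}(S)=|J(S)|$. By convention gcd and lcm are nonnegative. *)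

(* Defs.v *)
From mathcomp Require Import all_boot all_order all_algebra.
Set Implicit Arguments. Unset Strict Implicit. Unset Printing Implicit Defensive.
Import Order.TTheory GRing.Theory Num.Theory.

(* gcd(S), nonnegative; gcd of the empty family is 0 *)
Definition gcdS n (S : 'I_n -> int) : int := \big[gcdz/0%Z]_(i < n) S i.
(* lcm(S), nonnegative; lcm of the empty family is 1 *)
Definition lcmS n (S : 'I_n -> int) : int := \big[lcmz/1%Z]_(i < n) S i.
Definition gcdS_omit n (S : 'I_n -> int) (i : 'I_n) : int :=
  \big[gcdz/0%Z]_(j < n | j != i) S j.
Definition lcmS_omit n (S : 'I_n -> int) (i : 'I_n) : int :=
  \big[lcmz/1%Z]_(j < n | j != i) S j.

Definition is_normal n (S : 'I_n -> int) : Prop := gcdS S = 1%Z.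
Definition normalization n (S : 'I_n -> int) : 'I_n -> int :=
  fun i => (S i %/ gcdS S)%Z.

Definition Jstar n (S : 'I_n -> int) : {set 'I_n} :=
  [set i | gcdS_omit S i != gcdS S].
Definition J n (S : 'I_n -> int) : {set 'I_n} :=
  [set i | lcmS_omit S i != lcmS S].
Definition stype n (S : 'I_n -> int) : nat := #|Jstar S|.
Definition scotype n (S : 'I_n -> int) : nat := #|J S|.

Definition sbar n (S : 'I_n -> int) : 'I_n -> int :=
  fun i => (lcmS S %/ S i)%Z.

(* Main.v *)
Require Import Defs.
From mathcomp Require Import all_boot all_order all_algebra.
From Stdlib Require Import FunctionalExtensionality.
Import Order.TTheory GRing.Theory Num.Theory.

Lemma H1 L x y : 0 < L -> x %| L -> y %| L -> (L %/ x %| L %/ y) = (y %| x).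
Proof.
move=> L0 xL yL.
have x0 := dvdn_gt0 L0 xL.
have q0 : 0 < L %/ x by rewrite divn_gt0 // dvdn_leq.
rewrite dvdn_divRL // -{2}(divnK xL) dvdn_pmul2l //.
Qed.

Lemma K L x : 0 < L -> x %| L -> L %/ (L %/ x) = x.
Proof.
move=> L0 xL.
have x0 := dvdn_gt0 L0 xL.
have q0 : 0 < L %/ x by rewrite divn_gt0 // dvdn_leq.
by rewrite -{1}(divnK xL) mulKn.
Qed.

Section Fam.
Variables (n : nat) (P : pred 'I_n) (s : 'I_n -> nat) (L : nat).
Hypotheses (L0 : 0 < L) (sL : forall j, P j -> s j %| L) (s0 : forall j, 0 < s j).
Variable j0 : 'I_n. Hypothesis Pj0 : P j0.

Lemma lemA : \big[gcdn/0]_(j | P j) (L %/ s j) = L %/ \big[lcmn/1]_(j | P j) s j.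
Proof.
set G := \big[gcdn/0]_(j | P j) _; set M := \big[lcmn/1]_(j | P j) _.
have ML : M %| L by apply/dvdn_biglcmP => j Pj; apply: sL.
have GL : G %| L.
  apply: (@dvdn_trans (L %/ s j0)); last by apply: dvdn_div; apply: sL.
  exact: (@biggcdn_inf _ j0 P (fun j => L %/ s j) _ Pj0 (dvdnn _)).
apply/eqP; rewrite eqn_dvd; apply/andP; split.
  rewrite dvdn_divRL // mulnC -dvdn_divRL //.
  apply/dvdn_biglcmP => j Pj.
  rewrite dvdn_divRL // mulnC -dvdn_divRL ?sL //.
  by move/dvdn_biggcdP: (dvdnn G); apply.
apply/dvdn_biggcdP => j Pj.
rewrite H1 ?sL //; exact: (@biglcmn_sup _ j P s _ Pj (dvdnn _)).
Qed.

Lemma lemB : \big[lcmn/1]_(j | P j) (L %/ s j) = L %/ \big[gcdn/0]_(j | P j) s j.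
Proof.
set G := \big[gcdn/0]_(j | P j) _; set M := \big[lcmn/1]_(j | P j) _.
have GL : G %| L.
  apply: (@dvdn_trans (s j0)); last exact: sL.
  exact: (@biggcdn_inf _ j0 P s _ Pj0 (dvdnn _)).
have ML : M %| L by apply/dvdn_biglcmP => j Pj; apply: dvdn_div; apply: sL.
have G0 : 0 < G := dvdn_gt0 L0 GL.
have M0 : 0 < M := dvdn_gt0 L0 ML.
apply/eqP; rewrite eqn_dvd; apply/andP; split.
  apply/dvdn_biglcmP => j Pj; rewrite H1 ?sL //.
  by move/dvdn_biggcdP: (dvdnn G); apply.
rewrite -(@K _ _ L0 ML) H1 //; last exact: dvdn_div.
apply/dvdn_biggcdP => j Pj.
rewrite -(@K _ _ L0 (sL j Pj)) H1 //.
  exact: (@biglcmn_sup _ j P (fun j => L %/ s j) _ Pj (dvdnn _)).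
by apply: dvdn_div; apply: sL.
Qed.
End Fam.

Lemma divdiv L G x : 0 < L -> G %| x -> x %| L -> (L %/ G) %/ (L %/ x) = x %/ G.
Proof.
move=> L0 Gx xL.
case/dvdnP: Gx xL => m -> xL.
case/dvdnP: xL L0 => k -> L0.
move: L0; rewrite !muln_gt0 => /and3P[k0 m0 G0].
have e1 : k * (m * G) %/ (m * G) = k by rewrite mulnK // muln_gt0 m0.
have e2 : k * (m * G) %/ G = k * m by rewrite mulnA mulnK.
by rewrite e1 e2 mulnK // mulKn.
Qed.

Lemma div1 L x : 0 < L -> x %| L -> (L %/ x == 1) = (x == L).
Proof.
move=> L0 xL; apply/eqP/eqP => [h|->]; last by rewrite divnn L0.
by rewrite -(divnK xL) h mul1n.
Qed.

Lemma divinj L x y : 0 < L -> x %| L -> y %| L -> (L %/ x == L %/ y) = (x == y).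
Proof.
move=> L0 xL yL; apply/eqP/eqP => [h|->] //.
by rewrite -(@K L x) // h K.
Qed.

Lemma cG n (f : 'I_n -> nat) (P : pred 'I_n) :
  \big[gcdz/0%Z]_(j < n | P j) Posz (f j) = Posz (\big[gcdn/0]_(j < n | P j) f j).
Proof. by rewrite (big_morph Posz (id1 := 0%Z) (op1 := gcdz)). Qed.

Lemma cL n (f : 'I_n -> nat) (P : pred 'I_n) :
  \big[lcmz/1%Z]_(j < n | P j) Posz (f j) = Posz (\big[lcmn/1]_(j < n | P j) f j).
Proof. by rewrite (big_morph Posz (id1 := 1%Z) (op1 := lcmz)). Qed.

Lemma main_nat (n : nat) (s : 'I_n -> nat) : (2 <= n)%N -> (forall i, 0 < s i) ->
  let S := fun i => Posz (s i) in
  [/\ is_normal (sbar S) /\ sbar (sbar S) =1 normalization S,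
      Jstar (sbar S) = J S /\ Jstar S = J (sbar S) &
      stype (sbar S) = scotype S /\ stype S = scotype (sbar S)].
Proof.
move=> n2 s0 S.
set L := \big[lcmn/1]_(j < n) s j.
have L0 : 0 < L.
  by rewrite /L; apply: (big_ind (fun x => 0 < x)) => // x y; rewrite lcmn_gt0 => -> ->.
set t := fun i => L %/ s i.
have sL j : s j %| L := @biglcmn_sup _ j xpredT s _ isT (dvdnn _).
have eb : sbar S = fun i => Posz (t i).
  by apply: functional_extensionality => i; rewrite /sbar /lcmS cL divz_nat.
have o0 : 0 < n by apply: leq_trans n2.
pose i0 : 'I_n := Ordinal o0. pose i1 : 'I_n := Ordinal n2.
have other i : exists j : 'I_n, j != i.
  case: (eqVneq i i0) => [->|h]; last by exists i0; rewrite eq_sym.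
  by exists i1.
have GA := @lemA n xpredT s L L0 (fun j _ => sL j) i0 isT.
have GB := @lemB n xpredT s L L0 (fun j _ => sL j) i0 isT.
set G := \big[gcdn/0]_(j < n) s j.
have Gs j : G %| s j := @biggcdn_inf _ j xpredT s _ isT (dvdnn _).
have GL : G %| L := dvdn_trans (Gs i0) (sL i0).
have eGt : gcdS (sbar S) = 1%Z.
  by rewrite eb /gcdS cG /t GA divnn L0.
have eJ1 : Jstar (sbar S) = J S.
  apply/setP => i; rewrite !inE /gcdS_omit /lcmS_omit eGt eb cG /S cL /lcmS cL eqz_nat.
  case: (other i) => j ji.
  have LA := @lemA n (fun k => k != i) s L L0 (fun j _ => sL j) j ji.
  rewrite /t LA div1 //.
  by apply/dvdn_biglcmP => k _; apply: sL.
have eJ2 : Jstar S = J (sbar S).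
  apply/setP => i; rewrite !inE /gcdS_omit /lcmS_omit /gcdS /lcmS eb /S !cG !cL eqz_nat.
  case: (other i) => j ji.
  have LB := @lemB n (fun k => k != i) s L L0 (fun j _ => sL j) j ji.
  rewrite /t LB GB eqz_nat divinj //.
  by apply: dvdn_trans (sL j); apply: (@biggcdn_inf _ j (fun k => k != i) s _ ji (dvdnn _)).
split; [split | split | by rewrite /stype /scotype eJ1 eJ2].
- exact: eGt.
- move=> i; rewrite {1}eb /sbar /lcmS cL /t GB divz_nat /normalization /gcdS /S cG divz_nat.
  by rewrite divdiv.
- exact: eJ1.
- exact: eJ2.
Qed.

Theorem lemma4p2 (n : nat) (S : 'I_n -> int) :
  (2 <= n)%N -> (forall i, (0 < S i)%R) ->
  [/\ is_normal (sbar S) /\ sbar (sbar S) =1 normalization S,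
      Jstar (sbar S) = J S /\ Jstar S = J (sbar S) &
      stype (sbar S) = scotype S /\ stype S = scotype (sbar S)].
Proof.
move=> n2 Sp.
have eS : S = fun i => Posz `|S i|%N.
  by apply: functional_extensionality => i; rewrite abszE gtr0_norm.
have pos : forall i, (0 < `|S i|)%N by move=> i; rewrite absz_gt0 gt_eqF.
rewrite eS; exact: (@main_nat n (fun i => `|S i|%N) n2 pos).
Qed.
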